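(* Let $a_0=0$ and let $a_1<a_2<\cdots$ be the increasing enumeration of $\{m\ge1:\ c_m=1\}$. Then for every $n\ge0$, $$t_{a_n}=\tfrac12(t_n+t_{n+1})+\tfrac12(-1)^n(t_n-t_{n+1}).$$ In particular $t_{a_{2n}}=t_n$ and $t_{a_{2n+1}}=t_{n+1}$ for all $n\ge0$.
   Context: For $n\in\mathbb{N}$ let $s_2(n)$ be the sum of the binary digits of $n$ and $t_n=s_2(n)\bmod 2\in\{0,1\}$ (the Prouhet–Thue–Morse sequence). Let $F(X)=\sum_{n\ge1}t_nX^n\in\mathbb{F}_2[[X]]$ and let $G(X)=\sum_{n\ge1}c_nX^n\in\mathbb{F}_2[[X]]$ be its compositional inverse, i.e. $F(G(X))=G(F(X))=X$. The $c_n$ are identified with integers in $\{0,1\}$. *)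

(* Defs.v *)
From HB Require Import structures.
From mathcomp Require Import all_boot all_order all_algebra.
Set Implicit Arguments. Unset Strict Implicit. Unset Printing Implicit Defensive.
Import Order.TTheory GRing.Theory Num.Theory.
Local Open Scope ring_scope.

(* s_2(n): sum of binary digits; bit i of n is odd (n %/ 2^i), and bits with
   i >= n vanish since 2^i > n. *)
Definition s2 (n : nat) : nat := (\sum_(i < n) odd (n %/ 2 ^ i))%N.

Definition tm (n : nat) : bool := odd (s2 n).

Definition Ftrunc (N : nat) : {poly 'F_2} :=
  \poly_(i < N.+1) (if (0 < i)%N then (tm i)%:R else 0).

Definition trunc (c : nat -> 'F_2) (N : nat) : {poly 'F_2} :=
  \poly_(i < N.+1) c i.

(* G(X) = sum_{n>=1} c_n X^n is the compositional inverse of F: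
   F(G(X)) = X and G(F(X)) = X in F_2[[X]].  Since both series have zero
   constant term, the coefficient of X^n of a composition only depends on the
   truncations at any order N >= n. *)
Definition is_comp_inverse_of_F (c : nat -> 'F_2) : Prop :=
  c 0%N = 0 /\
  (forall N n : nat, (n <= N)%N ->
      (Ftrunc N \Po trunc c N)`_n = (n == 1%N)%:R) /\
  (forall N n : nat, (n <= N)%N ->
      (trunc c N \Po Ftrunc N)`_n = (n == 1%N)%:R).

Definition is_enumeration (c : nat -> 'F_2) (a : nat -> nat) : Prop :=
  a 0%N = 0%N /\
  (forall n, (a n < a n.+1)%N) /\
  (forall m, (1 <= m)%N -> (c m = 1 <-> exists2 n, (1 <= n)%N & a n = m)).

(* Main.v *)
Require Import Defs.
From HB Require Import structures.
From mathcomp Require Import all_boot all_order all_algebra.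
From mathcomp Require Import zify ring lra.
Import Order.TTheory GRing.Theory Num.Theory.

Definition Dw (w n : nat) : nat := (\sum_(i < n) odd (n %/ 2 ^ i) * w ^ i)%N.

Lemma DwK (w K n : nat) : (n <= K)%N ->
  (\sum_(i < K) odd (n %/ 2 ^ i) * w ^ i)%N = Dw w n.
Proof.
rewrite /Dw; elim: K => [|K IH]; first by rewrite leqn0 => /eqP ->.
rewrite leq_eqVlt => /orP [/eqP <-|]; first by [].
rewrite ltnS => H; rewrite -(IH H) big_ord_recr /=.
have /divn_small -> : (n < 2 ^ K)%N.
  by apply: leq_ltn_trans H (ltn_expl K (isT : (1 < 2)%N)).
by rewrite addn0.
Qed.

Lemma DwE (w n : nat) : Dw w n = (odd n + w * Dw w n./2)%N.
Proof.
case: n => [|k]; first by rewrite /Dw /= !big_ord0 muln0.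
rewrite {1}/Dw big_ord_recl /= expn0 divn1 muln1.
have hk : (k.+1./2 <= k)%N by rewrite -divn2; lia.
rewrite -(DwK w _ _ hk). idtac.

congr (_ + _)%N; rewrite big_distrr /=; apply: eq_bigr => i _.
rewrite /bump /= add1n !expnS divnMA divn2 mulnCA.
by [].

Qed.


Lemma s2E n : s2 n = Dw 1 n.
Proof. rewrite /s2 /Dw; apply: eq_bigr => i _; by rewrite exp1n muln1. Qed.

Lemma tmE n : tm n = odd n (+) tm (n %/ 2).
Proof. by rewrite /tm !s2E {1}DwE mul1n oddD divn2 oddb. Qed.

Lemma tm2 n : tm (2 * n) = tm n.
Proof.
rewrite tmE oddM /= (_ : (2 * n) %/ 2 = n)%N //.
by rewrite mulKn.
Qed.

Lemma tm21 n : tm (2 * n + 1) = ~~ tm n.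
Proof.
rewrite tmE oddD oddM /= (_ : (2 * n + 1) %/ 2 = n)%N //; lia.
Qed.

Lemma tm0 : tm 0 = false. Proof. by rewrite /tm /s2 big_ord0. Qed.
Lemma tm1 : tm 1 = true. Proof. by rewrite /tm /s2 big_ord1. Qed.

Definition mo n := Dw 4 n.

Lemma mo2 j : mo (2 * j) = (4 * mo j)%N.
Proof. by rewrite /mo DwE oddM /= -/(mo _) -divn2 mulKn. Qed.

Lemma mo21 j : mo (2 * j + 1) = (4 * mo j + 1)%N.
Proof.
rewrite /mo DwE oddD oddM /= -divn2 (_ : (2 * j + 1) %/ 2 = j)%N; last lia.
by rewrite addnC.
Qed.

Lemma mo0 : mo 0 = 0%N. Proof. by rewrite /mo /Dw big_ord0. Qed.

Lemma nat_split j : j = (2 * (j %/ 2) + (j %% 2))%N.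
Proof. lia. Qed.

Lemma mo_inc k : (mo k < mo k.+1)%N.
Proof.
elim/ltn_ind: k => k IH.
case/orP: (orbN (odd k)) => hk.
- have -> : k = (2 * (k %/ 2) + 1)%N by rewrite {1}(nat_split k) modn2 hk.
  have -> : (2 * (k %/ 2) + 1).+1 = 2 * (k %/ 2).+1 by lia.
  rewrite mo21 mo2.
  have := IH (k %/ 2) ltac:(rewrite {2}(nat_split k) modn2 hk; lia). lia.
- have -> : k = (2 * (k %/ 2))%N by rewrite {1}(nat_split k) modn2 (negbTE hk) addn0.
  have -> : (2 * (k %/ 2)).+1 = 2 * (k %/ 2) + 1 by lia.
  rewrite mo21 mo2; lia.
Qed.

Lemma incr_lt (f : nat -> nat) : (forall n, f n < f n.+1)%N ->
  forall m n, (m < n)%N -> (f m < f n)%N.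
Proof.
move=> hf m; elim=> [//|n IH]; rewrite ltnS leq_eqVlt => /orP [/eqP ->|/IH h].
  exact: hf.
exact: ltn_trans h (hf n).
Qed.

Lemma incr_ge (f : nat -> nat) : (forall n, f n < f n.+1)%N ->
  forall n, (n + f 0 <= f n)%N.
Proof.
move=> hf; elim=> [//|n IH]; have := hf n; lia.
Qed.

Lemma mo_ge k : (k <= mo k)%N.
Proof. have := @incr_ge mo mo_inc k; lia. Qed.

Lemma tm4 (b : bool) x : tm (4 * x + b) = b (+) tm x.
Proof.
rewrite tmE oddD oddM /= (_ : (4 * x + b) %/ 2 = 2 * x)%N; last by case: b; lia.
by rewrite tm2 oddb.
Qed.

Lemma tm_mo k : tm (mo k) = tm k.
Proof.
elim/ltn_ind: k => k IH.
case: k IH => [|k] IH; first by rewrite mo0.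
rewrite {2}(nat_split k.+1) {1}(nat_split k.+1) modn2.
case: (odd k.+1).
- rewrite mo21 (tm4 true) tm21 IH //; lia.
- rewrite addn0 mo2 -[(4 * _)%N]addn0 (tm4 false) tm2 IH //; lia.
Qed.

Lemma tm8 x j : (j < 8)%N -> tm (8 * x + j) = tm x (+) tm j.
Proof.
case: j => [|[|[|[|[|[|[|[|j]]]]]]]] hj //.
- rewrite (_ : (8 * x + 0)%N = (2 * (2 * (2 * x + 0) + 0) + 0)%N); last lia.
  rewrite ?addn0 ?tm2 ?tm21 ?(tm2 (2 * x + 1)) ?(tm21 (2 * x + 1)) ?tm21 ?tm2.
  by case: (tm x); rewrite /tm /s2 ?big_ord_recr ?big_ord0.
- rewrite (_ : (8 * x + 1)%N = (2 * (2 * (2 * x + 0) + 0) + 1)%N); last lia.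
  rewrite ?addn0 ?tm2 ?tm21 ?(tm2 (2 * x + 1)) ?(tm21 (2 * x + 1)) ?tm21 ?tm2.
  by case: (tm x); rewrite /tm /s2 ?big_ord_recr ?big_ord0.
- rewrite (_ : (8 * x + 2)%N = (2 * (2 * (2 * x + 0) + 1) + 0)%N); last lia.
  rewrite ?addn0 ?tm2 ?tm21 ?(tm2 (2 * x + 1)) ?(tm21 (2 * x + 1)) ?tm21 ?tm2.
  by case: (tm x); rewrite /tm /s2 ?big_ord_recr ?big_ord0.
- rewrite (_ : (8 * x + 3)%N = (2 * (2 * (2 * x + 0) + 1) + 1)%N); last lia.
  rewrite ?addn0 ?tm2 ?tm21 ?(tm2 (2 * x + 1)) ?(tm21 (2 * x + 1)) ?tm21 ?tm2.
  by case: (tm x); rewrite /tm /s2 ?big_ord_recr ?big_ord0.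
- rewrite (_ : (8 * x + 4)%N = (2 * (2 * (2 * x + 1) + 0) + 0)%N); last lia.
  rewrite ?addn0 ?tm2 ?tm21 ?(tm2 (2 * x + 1)) ?(tm21 (2 * x + 1)) ?tm21 ?tm2.
  by case: (tm x); rewrite /tm /s2 ?big_ord_recr ?big_ord0.
- rewrite (_ : (8 * x + 5)%N = (2 * (2 * (2 * x + 1) + 0) + 1)%N); last lia.
  rewrite ?addn0 ?tm2 ?tm21 ?(tm2 (2 * x + 1)) ?(tm21 (2 * x + 1)) ?tm21 ?tm2.
  by case: (tm x); rewrite /tm /s2 ?big_ord_recr ?big_ord0.
- rewrite (_ : (8 * x + 6)%N = (2 * (2 * (2 * x + 1) + 1) + 0)%N); last lia.
  rewrite ?addn0 ?tm2 ?tm21 ?(tm2 (2 * x + 1)) ?(tm21 (2 * x + 1)) ?tm21 ?tm2.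
  by case: (tm x); rewrite /tm /s2 ?big_ord_recr ?big_ord0.
- rewrite (_ : (8 * x + 7)%N = (2 * (2 * (2 * x + 1) + 1) + 1)%N); last lia.
  rewrite ?addn0 ?tm2 ?tm21 ?(tm2 (2 * x + 1)) ?(tm21 (2 * x + 1)) ?tm21 ?tm2.
  by case: (tm x); rewrite /tm /s2 ?big_ord_recr ?big_ord0.
Qed.

Definition e (i : nat) : nat := (8 * mo (i %/ 4) + i %% 4)%N.
Definition b (n : nat) : nat := (e n.+1 - 1)%N.

Lemma e_inc i : (e i < e i.+1)%N.
Proof.
rewrite /e.
have [h|h] : (i %% 4 < 3 \/ i %% 4 = 3)%N by lia.
- have -> : (i.+1 %/ 4 = i %/ 4)%N by lia.
  lia.
- have -> : (i.+1 %/ 4 = (i %/ 4).+1)%N by lia.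
  have := mo_inc (i %/ 4); lia.
Qed.

Lemma e0 : e 0 = 0%N. Proof. by rewrite /e mo0. Qed.
Lemma e1 : e 1 = 1%N. Proof. by rewrite /e mo0. Qed.

Lemma e_ge i : (i <= e i)%N.
Proof. have := @incr_ge e e_inc i; lia. Qed.

Lemma e_pos n : (1 <= e n.+1)%N.
Proof. have := @incr_lt e e_inc 0 n.+1 isT; rewrite e0. lia. Qed.

Lemma b_inc n : (b n < b n.+1)%N.
Proof. rewrite /b; have := e_inc n.+1; have := e_pos n; lia. Qed.

Lemma b0 : b 0 = 0%N. Proof. by rewrite /b e1. Qed.

Lemma tm_mo8m1 j : (1 <= j)%N -> tm (8 * mo j - 1) = tm j.
Proof.
elim/ltn_ind: j => j IH hj.
rewrite {2}(nat_split j) {1}(nat_split j) modn2.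
case hodd: (odd j).
- rewrite mo21 tm21.
  have -> : (8 * (4 * mo (j %/ 2) + 1) - 1 = 2 * (2 * (2 * (2 * (2 * mo (j %/ 2))) + 1) + 1) + 1)%N by lia.
  by rewrite tm21 tm21 tm21 tm2 tm2 tm_mo; case: (tm _).
- rewrite /= addn0 mo2 tm2.
  have hj2 : (1 <= j %/ 2)%N.
    move: hj; rewrite {1}(nat_split j) modn2 hodd; lia.
  have := mo_ge (j %/ 2) => hm.
  have -> : (8 * (4 * mo (j %/ 2)) - 1 = 2 * (2 * (8 * mo (j %/ 2) - 1) + 1) + 1)%N by lia.
  rewrite tm21 tm21 IH //; last by rewrite {2}(nat_split j) modn2 hodd; lia.
  by case: (tm _).
Qed.

Lemma tm_b_even n : tm (b (2 * n)) = tm n.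
Proof.
rewrite /b /e.
case hodd: (odd n).
- have h2 : (n %% 2 = 1)%N by rewrite modn2 hodd.
  have -> : ((2 * n).+1 %/ 4 = n %/ 2)%N by lia.
  have -> : ((2 * n).+1 %% 4 = 3)%N by lia.
  rewrite (_ : (8 * mo (n %/ 2) + 3 - 1 = 8 * mo (n %/ 2) + 2)%N); last lia.
  have -> : n = (2 * (n %/ 2) + 1)%N by lia.
  rewrite tm8 // tm21 tm_mo (_ : tm 2 = true); last by rewrite /tm /s2 ?big_ord_recr ?big_ord0.
  by rewrite addbT (_ : ((2 * (n %/ 2) + 1) %/ 2 = n %/ 2)%N) //; lia.
- have h2 : (n %% 2 = 0)%N by rewrite modn2 hodd.
  have -> : ((2 * n).+1 %/ 4 = n %/ 2)%N by lia.
  have -> : ((2 * n).+1 %% 4 = 1)%N by lia.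
  rewrite (_ : (8 * mo (n %/ 2) + 1 - 1 = 8 * mo (n %/ 2) + 0)%N); last lia.
  have -> : n = (2 * (n %/ 2))%N by lia.
  rewrite tm8 // tm2 tm_mo tm0 addbF.
  by rewrite (_ : ((2 * (n %/ 2)) %/ 2 = n %/ 2)%N) //; lia.
Qed.

Lemma tm_b_odd n : tm (b (2 * n).+1) = tm n.+1.
Proof.
rewrite /b /e.
case hodd: (odd n).
- have h2 : (n %% 2 = 1)%N by rewrite modn2 hodd.
  have -> : ((2 * n).+2 %/ 4 = (n.+1) %/ 2)%N by lia.
  have -> : ((2 * n).+2 %% 4 = 0)%N by lia.
  rewrite addn0 tm_mo8m1; last by lia.
  have {2}-> : n.+1 = (2 * (n.+1 %/ 2))%N by lia.
  by rewrite tm2.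
- have h2 : (n %% 2 = 0)%N by rewrite modn2 hodd.
  have -> : ((2 * n).+2 %/ 4 = n %/ 2)%N by lia.
  have -> : ((2 * n).+2 %% 4 = 2)%N by lia.
  rewrite (_ : (8 * mo (n %/ 2) + 2 - 1 = 8 * mo (n %/ 2) + 1)%N); last lia.
  have -> : n.+1 = (2 * (n %/ 2) + 1)%N by lia.
  by rewrite tm8 // tm21 tm_mo tm1 addbT.
Qed.

Local Open Scope ring_scope.

Notation PF := {poly 'F_2}.

Lemma F2_2 : (2%:R : 'F_2) = 0. Proof. exact: (pchar_Fp_0 (isT : prime 2)). Qed.

Lemma P2 : (2%:R : PF) = 0.
Proof. by rewrite -polyC_natr F2_2. Qed.

Lemma addpp (p : PF) : p + p = 0.
Proof. by rewrite -mulr2n -mulr_natr P2 mulr0. Qed.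

Lemma sqrD2 (p q : PF) : (p + q) ^+ 2 = p ^+ 2 + q ^+ 2.
Proof. by rewrite sqrrD -mulr_natr P2 mulr0 addr0. Qed.

Lemma dvdXnP (n : nat) (p : PF) :
  reflect (forall i, (i < n)%N -> p`_i = 0) ('X^n %| p).
Proof.
apply: (iffP idP).
- move=> /dvdpP [q ->] i hi; by rewrite coefMXn hi.
- move=> h; rewrite -(poly_take_drop n p).
  have -> : take_poly n p = 0.
    apply/polyP => i; rewrite coef_take_poly coef0.
    by case: ifP => // /h.
  by rewrite add0r dvdp_mull.
Qed.

Lemma cop_cancel (n : nat) (d u : PF) : u.[0] != 0 -> 'X^n %| d * u -> 'X^n %| d.
Proof.
move=> hu; rewrite Gauss_dvdpl //.
apply: coprimep_expl.
rewrite coprimep_sym -['X]subr0 -polyC0 coprimep_XsubC.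
by rewrite /root hu.
Qed.

Lemma X_dvd (q : PF) : q.[0] = 0 -> 'X %| q.
Proof. by move=> h; rewrite -['X]subr0 -polyC0 dvdp_XsubCl /root h. Qed.

Lemma dvd_comp (n : nat) (p q : PF) : 'X^n %| p -> q.[0] = 0 -> 'X^n %| p \Po q.
Proof.
move=> /dvdpP [r ->] hq.
rewrite comp_polyM.
apply: dvdp_mull.
rewrite (_ : 'X^n \Po q = q ^+ n); last first.
  by rewrite rmorphXn /= comp_polyX.
by apply: dvdp_exp2r; apply: X_dvd.
Qed.

Lemma compdiff (p : PF) : forall q r : PF, q.[0] = 0 -> r.[0] = 0 ->
  exists s, (p \Po q) - (p \Po r) = (q - r) * s /\ s.[0] = p`_1.
Proof.
elim/poly_ind: p => [|p c IH] q r hq hr.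
  by exists 0; rewrite !comp_poly0 subrr mulr0 horner0 coef0.
have [s [hs hs0]] := IH q r hq hr.
exists (s * q + (p \Po r)); split.
  rewrite !comp_poly_MXaddC.
  have -> : p \Po q = (q - r) * s + (p \Po r) by rewrite -hs subrK.
  ring.
rewrite hornerD hornerM hq mulr0 add0r horner_comp hr horner_coef0.
by rewrite coefD coefMX coefC /= addr0.
Qed.

Lemma oppF2 (p : PF) : - p = p.
Proof. by apply/eqP; rewrite eq_sym -addr_eq0 addpp. Qed.

Lemma negb_F2 (x : bool) : ((~~ x)%:R : 'F_2) = 1 + x%:R.
Proof. by case: x; rewrite /= ?addr0 // -mulr2n F2_2. Qed.

Lemma split2 (F : nat -> PF) n :
  \sum_(0 <= i < 2 * n) F i = \sum_(0 <= i < n) (F (2 * i)%N + F (2 * i + 1)%N).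
Proof.
elim: n => [|n IH]; first by rewrite muln0 !big_geq.
rewrite (_ : (2 * n.+1 = (2 * n).+1.+1)%N); last lia.
rewrite !big_nat_recr //= IH addrA; congr (_ + _ + _).
by rewrite addn1.
Qed.

Lemma sq_sum (s : seq nat) (F : nat -> PF) :
  (\sum_(i <- s) F i) ^+ 2 = \sum_(i <- s) (F i) ^+ 2.
Proof.
elim: s => [|x s IH]; first by rewrite !big_nil expr0n.
by rewrite !big_cons sqrD2 IH.
Qed.

Lemma dvdp_sum (d : PF) (s : seq nat) (F : nat -> PF) :
  (forall i, i \in s -> d %| F i) -> d %| \sum_(i <- s) F i.
Proof.
elim: s => [|x s IH] h; first by rewrite big_nil dvdp0.
rewrite big_cons dvdp_add //; first by apply: h; rewrite inE eqxx.
by apply: IH => i hi; apply: h; rewrite inE hi orbT.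
Qed.

Lemma geom2 (Z : PF) n : (1 + Z) * \sum_(0 <= i < n) Z ^+ i = 1 + Z ^+ n.
Proof.
elim: n => [|n IH]; first by rewrite big_geq // mulr0 expr0 addpp.
rewrite big_nat_recr //= mulrDr IH exprS.
have -> : 1 + Z ^+ n + (1 + Z) * Z ^+ n = 1 + Z * Z ^+ n + (Z ^+ n + Z ^+ n) by ring.
by rewrite addpp addr0.
Qed.

Definition T K : PF := \sum_(0 <= i < 2 ^ K) (tm i)%:R *: 'X^i.

Lemma coefT K j : (T K)`_j = if (j < 2 ^ K)%N then (tm j)%:R else 0.
Proof.
rewrite /T big_mkord -(poly_def (2 ^ K) (fun i : nat => ((tm i)%:R : 'F_2))) coef_poly //.
Qed.

Lemma T_sq K : (T K) ^+ 2 = \sum_(0 <= i < 2 ^ K) (tm i)%:R *: ('X^2) ^+ i.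
Proof.
rewrite /T sq_sum; apply: eq_bigr => i _.
rewrite exprZn -!exprM mulnC; congr (_ *: _).
by case: (tm i); rewrite ?expr1n ?expr0n.
Qed.

Definition Sg K : PF := \sum_(0 <= i < 2 ^ K) ('X^2) ^+ i.

Lemma T_rec K : T K.+1 = (1 + 'X) * (T K) ^+ 2 + 'X * Sg K.
Proof.
rewrite /Sg T_sq {1}/T expnS split2 big_distrr big_distrr -big_split /=.
apply: eq_bigr => i _.
rewrite tm2 tm21 negb_F2 -exprM addn1 exprSr -!mul_polyC rmorphD /= polyC1.
ring.
Qed.

Lemma W_T K : 'X^(2 ^ K) %| (1 + 'X) ^+ 3 * (T K) ^+ 2 + (1 + 'X) ^+ 2 * T K + 'X.
Proof.
have hr := T_rec K.
have hd : 'X^(2 ^ K) %| T K.+1 - T K.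
  apply/dvdXnP => i hi; rewrite coefB !coefT hi.
  have -> : (i < 2 ^ K.+1)%N by rewrite expnS; lia.
  by rewrite subrr.
have hg : (1 + 'X) ^+ 2 * Sg K = 1 + 'X ^+ (2 * 2 ^ K).
  by rewrite sqrD2 expr1n /Sg geom2 exprM.
have -> : (1 + 'X) ^+ 3 * (T K) ^+ 2 + (1 + 'X) ^+ 2 * T K + 'X =
   (1 + 'X) ^+ 2 * (T K.+1 - T K) + 2%:R * ((1 + 'X) ^+ 2 * T K)
   - 'X * ((1 + 'X) ^+ 2 * Sg K - 1).
  rewrite hr; ring.
rewrite hg P2 mul0r addr0 addrC (addrC 1) addrK oppF2.
rewrite dvdp_add //; first by rewrite dvdp_mull // dvdp_exp2l //; lia.
by rewrite dvdp_mull.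
Qed.

Definition Wf (P : PF) := (1 + 'X) ^+ 3 * P ^+ 2 + (1 + 'X) ^+ 2 * P + 'X.

Lemma W_F N : 'X^(N.+1) %| Wf (Ftrunc N).
Proof.
have hK : (N.+1 <= 2 ^ N.+1)%N by apply: ltnW; apply: ltn_expl.
have hd : 'X^(N.+1) %| Ftrunc N - T N.+1.
  apply/dvdXnP => i hi; rewrite coefB coefT /Ftrunc coef_poly hi.
  rewrite (leq_trans hi hK).
  by case: i hi => [|i] hi; rewrite ?tm0 /= subrr.
have -> : Wf (Ftrunc N) = Wf (T N.+1) +
   (Ftrunc N - T N.+1) * ((1 + 'X) ^+ 3 * (Ftrunc N + T N.+1) + (1 + 'X) ^+ 2).
  rewrite /Wf; ring.
rewrite dvdp_add //; last by rewrite dvdp_mulr.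
apply: dvdp_trans (W_T N.+1).
exact: dvdp_exp2l.
Qed.

Definition M K : PF := \sum_(0 <= k < 2 ^ K) 'X^(8 * mo k).

Lemma M_rec K : (1 + 'X^8) * (M K) ^+ 4 = M K.+1.
Proof.
rewrite (_ : 4%N = (2 * 2)%N) // exprM /M !sq_sum expnS split2 big_distrr /=.
apply: eq_bigr => i _.
rewrite -!exprM mo2 mo21 mulrDl mul1r -exprD.
congr (_ + _); congr ('X^_); lia.
Qed.

Lemma M_diff K : 'X^(8 * 2 ^ K) %| M K.+1 - M K.
Proof.
rewrite /M (big_cat_nat _ (n := 2 ^ K)) //=; last by rewrite expnS; lia.
rewrite addrAC subrr add0r.
apply: dvdp_sum => i; rewrite mem_index_iota => /andP [hi _].
apply: dvdp_exp2l.
have := mo_ge i; lia.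
Qed.

Lemma M0 K : (M K).[0] = 1.
Proof.
have h : (2 ^ K = (2 ^ K).-1.+1)%N by rewrite prednK // expn_gt0.
rewrite /M horner_sum h big_nat_recl // mo0 muln0 hornerXn expr0.
rewrite big1 ?addr0 // => i _.
rewrite hornerXn expr0n.
have := mo_ge i.+1.
by case: (mo i.+1) => [|k] //; rewrite mulnS.
Qed.

Lemma M_cube K : 'X^(8 * 2 ^ K) %| (1 + 'X^8) * (M K) ^+ 3 - 1.
Proof.
apply: (@cop_cancel _ _ (M K)); first by rewrite M0 oner_neq0.
have -> : ((1 + 'X^8) * M K ^+ 3 - 1) * M K = (1 + 'X^8) * (M K) ^+ 4 - M K by ring.
by rewrite M_rec M_diff.
Qed.

Definition R K : PF := (1 + 'X) ^+ 3 * M K.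

Lemma X8 : (1 + 'X : PF) ^+ 8 = 1 + 'X^8.
Proof.
by rewrite (_ : 8%N = (2 * (2 * 2))%N) // !exprM !sqrD2 !expr1n -!exprM.
Qed.

Lemma R_cube K : 'X^(8 * 2 ^ K) %| (R K) ^+ 3 - (1 + 'X).
Proof.
have -> : (R K) ^+ 3 - (1 + 'X) = (1 + 'X) * ((1 + 'X) ^+ 8 * (M K) ^+ 3 - 1).
  rewrite /R; ring.
by rewrite X8 dvdp_mull // M_cube.
Qed.

Lemma split4 (F : nat -> PF) n :
  \sum_(0 <= i < 4 * n) F i =
  \sum_(0 <= k < n) (F (4 * k)%N + F (4 * k + 1)%N + F (4 * k + 2)%N + F (4 * k + 3)%N).
Proof.
elim: n => [|n IH]; first by rewrite muln0 !big_geq.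
rewrite (_ : (4 * n.+1 = (4 * n).+3.+1)%N); last lia.
rewrite !big_nat_recr //= IH -!addrA; congr (_ + _).
by rewrite !addn1 !addn2 !addn3.
Qed.

Lemma e4 k j : (j < 4)%N -> e (4 * k + j) = (8 * mo k + j)%N.
Proof.
move=> hj; rewrite /e.
have -> : ((4 * k + j) %/ 4 = k)%N by lia.
have -> : ((4 * k + j) %% 4 = j)%N by lia.
by [].
Qed.

Lemma X3 : (1 + 'X : PF) ^+ 3 = 1 + 'X + 'X ^+ 2 + 'X ^+ 3.
Proof.
have -> : (1 + 'X : PF) ^+ 3 = 1 + 'X + 'X ^+ 2 + 'X ^+ 3 + 2%:R * ('X + 'X ^+ 2) by ring.
by rewrite P2 mul0r addr0.
Qed.

Lemma R_sum K : R K = \sum_(0 <= i < 4 * 2 ^ K) 'X^(e i).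
Proof.
rewrite /R split4 X3 /M big_distrr /=; apply: eq_bigr => k _.
have -> : e (4 * k) = (8 * mo k)%N by rewrite -[(4 * k)%N]addn0 e4 // addn0.
rewrite !e4 // !exprD; ring.
Qed.

Lemma e_inj : injective e.
Proof.
move=> x y h; apply/eqP; case: (ltngtP x y) => // hxy.
- by have := @incr_lt e e_inc _ _ hxy; rewrite h ltnn.
- by have := @incr_lt e e_inc _ _ hxy; rewrite h ltnn.
Qed.

Lemma sum_ind (s : seq nat) m : uniq s ->
  \sum_(i <- s) ((m == e i)%:R : 'F_2) = (m \in map e s)%:R.
Proof.
elim: s => [|x s IH] /=; first by rewrite big_nil.
move=> /andP [hx hu]; rewrite big_cons IH // inE.
case: eqP => [->|] /=.
  suff -> : (e x \in map e s) = false by rewrite addr0.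
  apply/negbTE/negP => /mapP [y hy /e_inj ex].
  by move: hx; rewrite ex hy.
by rewrite add0r.
Qed.

Definition inS (m : nat) : bool := m \in map e (iota 0 m.+1).

Lemma inSP m : reflect (exists i, e i = m) (inS m).
Proof.
apply: (iffP idP).
  by move=> /mapP [i _ ->]; exists i.
move=> [i hi]; apply/mapP; exists i => //.
rewrite mem_iota /= add0n ltnS -hi; exact: e_ge.
Qed.

Lemma inS_iota m L : (m < L)%N -> (m \in map e (iota 0 L)) = inS m.
Proof.
move=> hL; apply/idP/inSP.
  by move=> /mapP [i _ ->]; exists i.
move=> [i hi]; apply/mapP; exists i => //.
rewrite mem_iota /= add0n; apply: leq_ltn_trans hL; rewrite -hi; exact: e_ge.
Qed.

Lemma coefR K m : (m < 4 * 2 ^ K)%N -> (R K)`_m = (inS m)%:R.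
Proof.
move=> hm; rewrite R_sum coef_sum.
under eq_bigr do rewrite coefXn.
by rewrite /index_iota subn0 sum_ind ?iota_uniq // inS_iota.
Qed.

Definition cstar (m : nat) : 'F_2 := ((m != 0%N) && inS m.+1)%:R.

Lemma inS0 : inS 0. Proof. by apply/inSP; exists 0%N; rewrite e0. Qed.
Lemma inS1 : inS 1. Proof. by apply/inSP; exists 1%N; rewrite e1. Qed.

Lemma R_Q N K : (N.+2 <= 4 * 2 ^ K)%N ->
  'X^(N.+2) %| R K - (1 + 'X + 'X * trunc cstar N).
Proof.
move=> hK; apply/dvdXnP => i hi.
rewrite coefB coefR; last exact: leq_trans hi hK.
rewrite !coefD coef1 coefX coefXM /trunc coef_poly.
case: i hi => [|[|j]] hi /=.
- by rewrite inS0 !addr0; apply: subrr.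
- by rewrite inS1 /cstar /= add0r addr0; apply: subrr.
- rewrite add0r ltnS (_ : (j < N)%N = true) /=; last by move: hi; rewrite !ltnS.
  by rewrite /cstar /= !add0r; apply: subrr.
Qed.

Definition Wc (Q : PF) := (1 + Q) ^+ 3 * 'X ^+ 2 + (1 + Q) ^+ 2 * 'X + Q.

Lemma cubic N : 'X^(N.+1) %| Wc (trunc cstar N).
Proof.
set Q := trunc cstar N.
have hK : (N.+2 <= 4 * 2 ^ N.+2)%N.
  apply: leq_trans (leq_pmull _ _) => //; apply: ltnW; exact: ltn_expl.
have h2 := @R_Q N N.+2 hK.
have h1 : 'X^(N.+2) %| (R N.+2) ^+ 3 - (1 + 'X).
  apply: dvdp_trans (R_cube N.+2); apply: dvdp_exp2l.
  apply: leq_trans hK _; lia.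
set B := 1 + 'X + 'X * Q.
have h3 : 'X^(N.+2) %| B ^+ 3 - (1 + 'X).
  have -> : B ^+ 3 - (1 + 'X) = ((R N.+2) ^+ 3 - (1 + 'X))
     - (R N.+2 - B) * ((R N.+2) ^+ 2 + R N.+2 * B + B ^+ 2) by ring.
  by rewrite dvdp_sub // dvdp_mulr.
have e3 : B ^+ 3 - (1 + 'X) = 'X * Wc Q + 2%:R * ('X * (1 + Q) + ('X * (1 + Q)) ^+ 2).
  by rewrite /B /Wc; ring.
rewrite e3 in h3.
move: h3; rewrite P2 mul0r addr0 exprS dvdp_mul2l //.
by rewrite polyX_eq0.
Qed.

Lemma c_eq (c : nat -> 'F_2) : is_comp_inverse_of_F c -> forall m, c m = cstar m.
Proof.
move=> [c0 [h1 _]] m.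
case: m => [|N]; first by rewrite c0 /cstar.
set n := N.+1.
set P := Ftrunc n; set Q := trunc cstar n; set Qc := trunc c n.
have hQ0 : Q.[0] = 0 by rewrite horner_coef0 /Q /trunc coef_poly /cstar.
have hQc0 : Qc.[0] = 0 by rewrite horner_coef0 /Qc /trunc coef_poly c0.
have hP0 : P.[0] = 0 by rewrite horner_coef0 /P /Ftrunc coef_poly.
have hP1 : P`_1 = 1 by rewrite /P /Ftrunc coef_poly /= tm1.
have hB : 'X^(n.+1) %| Wf P \Po Q by apply: dvd_comp => //; apply: W_F.
set Y := P \Po Q.
have eB : Wf P \Po Q = (1 + Q) ^+ 3 * Y ^+ 2 + (1 + Q) ^+ 2 * Y + Q.
  rewrite /Wf /Y !exprS !expr0 !mulr1 !comp_polyD !comp_polyM comp_polyX !comp_polyD comp_polyX -polyC1 comp_polyC polyC1; ring.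
rewrite eB in hB.
have hC := cubic n.
have hYX : 'X^(n.+1) %| Y - 'X.
  apply: (@cop_cancel _ _ ((1 + Q) ^+ 3 * (Y + 'X) + (1 + Q) ^+ 2)).
    by rewrite !hornerE horner_comp hQ0 hP0.
  have -> : (Y - 'X) * ((1 + Q) ^+ 3 * (Y + 'X) + (1 + Q) ^+ 2) =
     ((1 + Q) ^+ 3 * Y ^+ 2 + (1 + Q) ^+ 2 * Y + Q) - Wc Q by rewrite /Wc; ring.
  by rewrite dvdp_sub.
have hcX : 'X^(n.+1) %| (P \Po Qc) - 'X.
  apply/dvdXnP => i hi; rewrite coefB h1 // coefX; exact: subrr.
have [s [hs hs0]] := compdiff P Qc Q hQc0 hQ0.
have hd : 'X^(n.+1) %| (Qc - Q) * s.
  rewrite -hs (_ : (P \Po Qc) - (P \Po Q) = ((P \Po Qc) - 'X) - (Y - 'X)); last first.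
    by rewrite /Y; ring.
  by rewrite dvdp_sub.
have hu : s.[0] != 0 by rewrite hs0 hP1 oner_neq0.
have := @cop_cancel _ _ _ hu hd => /dvdXnP /(_ n (ltnSn n)).
rewrite coefB /Qc /Q /trunc !coef_poly ltnSn.
by move/eqP; rewrite subr_eq0 => /eqP.
Qed.

Lemma natF2_1 (x : bool) : ((x%:R : 'F_2) = 1) <-> x.
Proof.
case: x => //=; split=> // h.
Qed.

Lemma cstar1 m : (1 <= m)%N -> (cstar m = 1 <-> exists2 n, (1 <= n)%N & b n = m).
Proof.
move=> hm; rewrite /cstar natF2_1; split.
- move=> /andP [_ /inSP [i hi]].
  have hi2 : (2 <= i)%N.
    case: i hi => [|[|i]] //; rewrite ?e0 ?e1; lia.
  exists i.-1; first lia.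
  rewrite /b prednK; [lia|lia].
- move=> [k hk hb]; apply/andP; split; first by rewrite -lt0n.
  apply/inSP; exists k.+1.
  move: hb; rewrite /b; have := e_pos k; lia.
Qed.

Lemma incr_eq (f g : nat -> nat) :
  (forall n, f n < f n.+1)%N -> (forall n, g n < g n.+1)%N ->
  (forall m, (exists n, f n = m) <-> (exists n, g n = m)) ->
  forall n, f n = g n.
Proof.
move=> hf hg hr n; elim/ltn_ind: n => n IH.
have [k hk] : exists k, g k = f n by apply/hr; exists n.
have [k' hk'] : exists k, f k = g n by apply/hr; exists n.
have h1 : (g n <= f n)%N.
  rewrite -hk; case: (ltnP k n) => h.
    by have := @incr_lt f hf _ _ h; rewrite (IH k h) hk ltnn.
  case: (ltngtP n k) h => // h _; last by rewrite h.
  exact: ltnW (@incr_lt g hg _ _ h).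
have h2 : (f n <= g n)%N.
  rewrite -hk'; case: (ltnP k' n) => h.
    by have := @incr_lt g hg _ _ h; rewrite -(IH k' h) hk' ltnn.
  case: (ltngtP n k') h => // h _; last by rewrite h.
  exact: ltnW (@incr_lt f hf _ _ h).
by apply/eqP; rewrite eqn_leq h1 h2.
Qed.

Lemma b_ge n : (n <= b n)%N.
Proof. have := @incr_ge b b_inc n; lia. Qed.

Lemma tm_b n : tm (b n) = if odd n then tm n.+1 else tm n.
Proof.
case hn: (odd n).
- have h : (n %% 2 = 1)%N by rewrite modn2 hn.
  rewrite {1}(_ : n = (2 * (n %/ 2)).+1); last lia.
  rewrite tm_b_odd (_ : n.+1 = 2 * (n %/ 2).+1)%N; last lia.
  by rewrite tm2.
- have h : (n %% 2 = 0)%N by rewrite modn2 hn.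
  rewrite {1}(_ : n = (2 * (n %/ 2))%N); last lia.
  rewrite tm_b_even {2}(_ : n = (2 * (n %/ 2))%N); last lia.
  by rewrite tm2.
Qed.

Theorem mainTheorem9 (c : nat -> 'F_2) :
  is_comp_inverse_of_F c ->
  (forall N : nat, exists2 m : nat, (N < m)%N & c m = 1) /\
  (forall a : nat -> nat, is_enumeration c a ->
     (forall n : nat,
        ((tm (a n))%:R : rat) =
          1 / 2 * ((tm n)%:R + (tm n.+1)%:R)
          + 1 / 2 * (-1) ^+ n * ((tm n)%:R - (tm n.+1)%:R)) /\
     (forall n : nat, tm (a (2 * n)%N) = tm n /\ tm (a (2 * n).+1) = tm n.+1)).
Proof.
move=> hc; have ceq := c_eq c hc.
split.
  move=> N; exists (b N.+1); first by have := b_ge N.+1; lia.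
  rewrite ceq; apply/cstar1; first by have := b_ge N.+1; lia.
  by exists N.+1.
move=> a [a0 [ainc aS]].
have hab : forall n, a n = b n.
  apply: incr_eq => // [|m]; first exact: b_inc.
  case: m => [|m].
    by split=> _; exists 0%N; rewrite ?a0 ?b0.
  have := aS m.+1 isT; rewrite ceq => haS.
  have := @cstar1 m.+1 isT => hbS.
  split.
  - move=> [n hn]; case: n hn => [|n] hn; first by rewrite a0 in hn.
    have [k hk hbk] : exists2 n, (1 <= n)%N & b n = m.+1.
      by apply/hbS/haS; exists n.+1.
    by exists k.
  - move=> [n hn]; case: n hn => [|n] hn; first by rewrite b0 in hn.
    have [k hk hak] : exists2 n, (1 <= n)%N & a n = m.+1.
      by apply/haS/hbS; exists n.+1.
    by exists k.
have ht : forall n, tm (a n) = if odd n then tm n.+1 else tm n.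
  by move=> n; rewrite hab tm_b.
split.
  move=> n; rewrite ht -signr_odd.
  case: (odd n) => /=; rewrite ?expr1 ?expr0; lra.
move=> n; rewrite !ht oddS oddM /=; split; first by rewrite tm2.
by rewrite (_ : (2 * n).+2 = 2 * n.+1)%N ?tm2 //; lia.
Qed.
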